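(* Let $G=(V,E)$ be a graph, let $K$ be a positive integer, and let $P$ be the output of the port-based randomized greedy procedure (Algorithm 2) described in the context, run on $G$ with parameter $K$. Then $$\tfrac12\rho(G)\le\mathbb{E}|P|\le\left(1+\tfrac{2}{K}\right)\rho(G),$$ where the expectation is over the random permutation used by the procedure.
   Context: $\rho(G)$ is the maximum number of edges in a path cover of $G$ (a collection of vertex-disjoint simple paths). Procedure (Algorithm 2): each vertex $w$ has two ports $w^0,w^1$. Build a graph $H$ whose vertices are, for every edge $(u,v)\in E$, $K+2$ vertices: one corresponding to $(u,v)$ occupying $u^0$ and $v^1$, one corresponding to $(u,v)$ occupying $u^1$ and $v^0$, and $K$ each corresponding to $(u,v)$ occupying $u^0$ and $v^0$. Two distinct vertices $a,b$ of $H$, corresponding to edges $e_a,e_b$ of $G$, are adjacent in $H$ if $e_a=e_b$, or if $e_a$ and $e_b$ share exactly one endpoint $w$ and $a,b$ occupy the same port of $w$. Pick a uniformly random permutation of the vertices of $H$ and compute the randomized greedy maximal independent set $I$: scan the vertices in this order and add a vertex to $I$ if none of its neighbors is already in $I$. The output $P$ is the set of edges of $G$ corresponding to vertices of $I$. *)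

(* Defs.v *)
From mathcomp Require Import all_boot all_order all_algebra fingroup perm.
Set Implicit Arguments. Unset Strict Implicit. Unset Printing Implicit Defensive.
Import Order.TTheory GRing.Theory Num.Theory.

(* A graph G = (V, E): vertex type T (finite), adjacency e (symmetric,
   irreflexive).  An undirected edge {u,v} is represented canonically by the
   ordered pair (u,v) with enum_rank u < enum_rank v. *)

(* a simple path in G: nonempty, consecutive vertices adjacent, no repeats
   (repeats are excluded globally by uniq (flatten C) below). *)
Definition is_gpath (T : finType) (e : rel T) (p : seq T) : bool :=
  if p is x :: q then path e x q else false.

Definition path_cover (T : finType) (e : rel T) (C : seq (seq T)) : bool :=
  all (is_gpath e) C && uniq (flatten C).

Definition cover_edges (T : finType) (C : seq (seq T)) : nat :=
  \sum_(p <- C) (size p).-1.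

Definition is_rho (T : finType) (e : rel T) (r : nat) : Prop :=
  (exists2 C, path_cover e C & cover_edges C = r) /\
  (forall C, path_cover e C -> cover_edges C <= r).

(* vertex (u, v, c) of H: edge {u,v} (u before v canonically), copy c:
   c = 0 : occupies u^0 and v^1
   c = 1 : occupies u^1 and v^0
   c >= 2 (K copies) : occupies u^0 and v^0 *)
Definition hvalid (T : finType) (e : rel T) (K : nat) (x : T * T * 'I_K.+2) : bool :=
  e x.1.1 x.1.2 && (enum_rank x.1.1 < enum_rank x.1.2)%N.

Notation HV e K := {x : _ * _ * 'I_K.+2 | hvalid e x}.

Definition hedge (T : finType) (e : rel T) (K : nat) (a : HV e K) : T * T :=
  (val a).1.

(* the port of endpoint w occupied by vertex a (meaningful for w an endpoint) *)
Definition hport (T : finType) (e : rel T) (K : nat) (a : HV e K) (w : T) : bool :=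
  if w == (val a).1.1 then (nat_of_ord (val a).2 == 1)%N
  else (nat_of_ord (val a).2 == 0)%N.

Definition hends (T : finType) (e : rel T) (K : nat) (a : HV e K) : {set T} :=
  [set (val a).1.1; (val a).1.2].

Definition hadj (T : finType) (e : rel T) (K : nat) : rel (HV e K) :=
  fun a b =>
    (a != b) &&
    ((hedge a == hedge b) ||
     ((#|hends a :&: hends b| == 1)%N &&
      [exists w in hends a :&: hends b, hport a w == hport b w])).

Definition greedy_mis (A : eqType) (adj : rel A) (s : seq A) : seq A :=
  foldl (fun I x => if has (adj x) I then I else rcons I x) [::] s.

Definition alg2_output (T : finType) (e : rel T) (K : nat) (s : {perm HV e K})
  : {set T * T} :=
  [set hedge x | x in greedy_mis (@hadj T e K) [seq s y | y <- enum [set: HV e K]]].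

Definition alg2_expected (T : finType) (e : rel T) (K : nat) : rat :=
  ((\sum_(s : {perm HV e K}) #|alg2_output s|)%:R / #|{perm HV e K}|%:R)%R.

(* Main.v *)
Require Import Defs.
From mathcomp Require Import all_boot all_order all_algebra fingroup perm.
From mathcomp Require Import zify ring lra.
Set Implicit Arguments. Unset Strict Implicit. Unset Printing Implicit Defensive.


Section Basic.
Variables (T : finType) (e : rel T) (K : nat).
Local Notation V := ({x : T * T * 'I_K.+2 | hvalid e x}).

Definition touch (a b : V) : bool :=
  [exists w, (w \in hends a) && (w \in hends b)].
Definition hdir (a : V) : bool := (nat_of_ord (val a).2 < 2)%N.

Lemma hv_neq (a : V) : (val a).1.1 != (val a).1.2.
Proof.
case: a => [[[u v] c] Ha]; have /andP[_ H] := Ha; apply/eqP => /= E; subst.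
by rewrite ltnn in H.
Qed.

Lemma hends_eq (a b : V) : hedge a = hedge b -> hends a = hends b.
Proof. by rewrite /hends /hedge => ->. Qed.

Lemma adj_sym : symmetric (@hadj T e K).
Proof.
move=> a b; rewrite /hadj eq_sym (eq_sym (hedge a)) setIC; congr (_ && (_ || (_ && _))).
by apply: eq_existsb => w; rewrite eq_sym.
Qed.

Lemma touchC a b : touch a b = touch b a.
Proof. by apply: eq_existsb => w; rewrite andbC. Qed.

Lemma ends2 (a b : V) t w : t != w -> t \in hends a -> w \in hends a ->
  t \in hends b -> w \in hends b -> hedge a = hedge b.
Proof.
case: a => [[[u1 v1] c1] Ha]; case: b => [[[u2 v2] c2] Hb].
have /andP[_ H1] := Ha; have /andP[_ H2] := Hb.
rewrite /hends /hedge /= !inE => tw.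
have R1 : u1 != v1 by apply/eqP => E; subst; rewrite ltnn in H1.
have R2 : u2 != v2 by apply/eqP => E; subst; rewrite ltnn in H2.
move=> H3 H4 H5 H6.
case/orP: H3 => /eqP E1; case/orP: H4 => /eqP E2; case/orP: H5 => /eqP E3;
  case/orP: H6 => /eqP E4; subst;
  rewrite ?eqxx in tw R1 R2 *; try done;
  try (by move: tw; rewrite ?E3 ?E4 eqxx);
  try (by rewrite ?E3 ?E4);
  try (exfalso; move: H1 H2; rewrite ?E3 ?E4 => H1 H2;
       have := ltn_trans H1 H2; by rewrite ltnn).
all: idtac.
Qed.

Lemma adj_port (a b : V) w : a != b -> w \in hends a -> w \in hends b ->
  hport a w = hport b w -> hadj a b.
Proof.
move=> ab wa wb hp; rewrite /hadj ab /=.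
case: (boolP (hedge a == hedge b)) => //= nh.
have -> : hends a :&: hends b = [set w].
  apply/setP => t; rewrite in_setI in_set1; case: (boolP (t == w)) => [/eqP -> | tw].
    by rewrite wa wb.
  apply/negbTE/negP => /andP[ta tb]; move/eqP: nh; apply.
  exact: (ends2 tw ta wa tb wb).
rewrite cards1 eqxx /=; apply/existsP; exists w; by rewrite in_set1 hp !eqxx.
Qed.

Lemma mem_hends1 (a : V) : (val a).1.1 \in hends a.
Proof. by rewrite /hends !inE eqxx. Qed.
Lemma mem_hends2 (a : V) : (val a).1.2 \in hends a.
Proof. by rewrite /hends !inE eqxx orbT. Qed.

Lemma adj_touch (a b : V) : hadj a b -> touch a b.
Proof.
case/andP => _ /orP[/eqP Eh | /andP[_ /existsP[w /andP[Hw _]]]].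
  apply/existsP; exists (val a).1.1; by rewrite -(hends_eq Eh) mem_hends1.
by apply/existsP; exists w; rewrite -in_setI.
Qed.

Lemma hport_both (a : V) : ~~ (hport a (val a).1.1 && hport a (val a).1.2).
Proof.
have := hv_neq a; case: a => [[[u v] c] Ha] /=; rewrite /hport /= eqxx eq_sym => /negbTE ->.
by case: (nat_of_ord c) => [|[|]].
Qed.

Lemma hport_dir (a : V) w : w \in hends a -> hport a w -> hdir a.
Proof.
have := hv_neq a; case: a => [[[u v] c] Ha] /=.
rewrite /hends /hport /hdir /= !inE => uv /orP[]/eqP ->; rewrite ?eqxx.
  by move/eqP->.
by rewrite eq_sym (negbTE uv) => /eqP->.
Qed.

End Basic.


Section Greedy.
Variables (T : finType) (e : rel T) (K : nat).
Local Notation V := ({x : T * T * 'I_K.+2 | hvalid e x}).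
Local Notation adj := (@hadj T e K).

Definition gstep (I : seq V) (x : V) := if has (adj x) I then I else rcons I x.
Definition indep (I : seq V) := forall a b, a \in I -> b \in I -> ~~ adj a b.

Lemma greedyE L : greedy_mis adj L = foldl gstep [::] L.
Proof. by []. Qed.

Lemma gfold_ext L I : exists2 J, foldl gstep I L = I ++ J & subseq J L.
Proof.
elim: L I => [|x L IH] I /=; first by exists [::]; rewrite ?cats0.
rewrite /gstep; case: ifP => _.
  have [J -> sJ] := IH I; exists J => //; exact: (subseq_trans sJ (subseq_cons L x)).
have [J -> sJ] := IH (rcons I x); exists (x :: J); first by rewrite -cats1 -catA.
by rewrite /= eqxx.
Qed.

Lemma gfold_indep L I : indep I -> indep (foldl gstep I L).
Proof.
elim: L I => [|x L IH] I //= HI; apply: IH; rewrite /gstep; case: ifP => // /negbT hx.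
move=> a b; rewrite !mem_rcons !inE => /orP[/eqP->|aI] /orP[/eqP->|bI].
- by rewrite /hadj eqxx.
- by apply/negP => H; move/hasP: hx; apply; exists b.
- by rewrite adj_sym; apply/negP => H; move/hasP: hx; apply; exists a.
- exact: HI.
Qed.

Lemma gfold_max L I y : y \in L ->
  (y \in foldl gstep I L) || has (adj y) (foldl gstep I L).
Proof.
have mono J I0 y0 : (y0 \in I0) || has (adj y0) I0 -> (y0 \in foldl gstep I0 J) || has (adj y0) (foldl gstep I0 J).
  have [J' -> _] := gfold_ext J I0; rewrite mem_cat has_cat.
  by case/orP => ->; rewrite ?orbT.
elim: L I => [|x L IH] I //=; rewrite inE => /orP[/eqP->|yL]; last exact: IH.
apply: (mono L (gstep I x) x); rewrite /gstep; case: ifP => [->|_]; first by rewrite orbT.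
by rewrite mem_rcons inE eqxx.
Qed.

Lemma greedy_sub L : subseq (greedy_mis adj L) L.
Proof. by rewrite greedyE; have [J -> sJ] := gfold_ext L [::]. Qed.

Lemma greedy_indep L : indep (greedy_mis adj L).
Proof. by rewrite greedyE; apply: gfold_indep. Qed.

Lemma greedy_max L y : y \in L -> y \notin greedy_mis adj L -> has (adj y) (greedy_mis adj L).
Proof. by rewrite greedyE => /(gfold_max [::]) /orP[->|]. Qed.

End Greedy.


Section Good.
Variables (T : finType) (e : rel T) (K : nat).
Local Notation V := ({x : T * T * 'I_K.+2 | hvalid e x}).
Local Notation adj := (@hadj T e K).

Definition good (I : seq V) (y : V) : bool :=
  all (fun z => ~~ touch z y) (take (index y I) I).

Lemma good_cat I1 x J : x \notin I1 -> good (I1 ++ x :: J) x = all (fun z => ~~ touch z x) I1.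
Proof.
move=> xI; rewrite /good index_cat (negbTE xI) /= eqxx addn0 take_size_cat //.
Qed.

Lemma good_rcons I x y : y \in I -> good (rcons I x) y = good I y.
Proof.
move=> yI; rewrite /good -cats1 index_cat yI takel_cat //.
by rewrite index_size.
Qed.

Lemma good_last I x : x \notin I -> good (rcons I x) x = all (fun z => ~~ touch z x) I.
Proof. by move=> xI; rewrite -cats1 good_cat. Qed.

Lemma touch_self (a : V) : touch a a.
Proof. by apply/existsP; exists (val a).1.1; rewrite mem_hends1. Qed.

Lemma touch_eqr (a b c : V) : hedge b = hedge c -> touch a b = touch a c.
Proof. by rewrite /touch => /hends_eq ->. Qed.

Lemma swap_good L x x' : uniq L -> x' \in L -> hedge x' = hedge x ->
  x \in greedy_mis adj L -> good (greedy_mis adj L) x ->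
  x' \in greedy_mis adj (map (tperm x x') L) /\
  good (greedy_mis adj (map (tperm x x') L)) x'.
Proof.
move=> uL x'L hh xG; have xL : x \in L by apply: (mem_subseq (greedy_sub L)).
case/splitPr: xL uL x'L xG => L1 L2.
rewrite cat_uniq /= => /and3P[_ /norP[xL1 _] /andP[xL2 _]] x'L.
rewrite !greedyE foldl_cat /=.
have [J1 EI1 sJ1] := gfold_ext L1 [::]; rewrite /= in EI1; rewrite EI1 => xG.
have I1L1 y : y \in J1 -> y \in L1 by apply: mem_subseq.
have hx : ~~ has (adj x) J1.
  apply/negP => hx; move: xG; have -> : gstep J1 x = J1 by rewrite /gstep hx.
  have [J2 -> sJ2] := gfold_ext L2 J1; rewrite mem_cat => /orP[/I1L1|/(mem_subseq sJ2)].
    by rewrite (negbTE xL1).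
  by rewrite (negbTE xL2).
have -> : gstep J1 x = rcons J1 x by rewrite /gstep (negbTE hx).
have [J2 -> _] := gfold_ext L2 (rcons J1 x); rewrite -cats1 -catA /=.
have xJ1 : x \notin J1 by apply: contra xL1; apply: I1L1.
rewrite good_cat // => /allP gx.
have ntx y : y \in J1 -> ~~ touch y x' by move=> /gx; rewrite (touch_eqr _ hh).
have hx' : ~~ has (adj x') J1.
  apply/hasP => [[z zJ /adj_touch]]; rewrite touchC; apply/negP; exact: ntx.
have x'J1 : x' \notin J1 by apply/negP => /ntx; rewrite touch_self.
have x'L1 : x' \notin L1.
  apply/negP => /(gfold_max [::]); rewrite EI1 (negbTE x'J1) /=.
  exact/negP.
rewrite map_cat map_id_in; last first.
  move=> y yL /=; apply: tpermD.
    by apply: contra xL1 => /eqP->.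
  by apply: contra x'L1 => /eqP->.
rewrite /= tpermL foldl_cat /= EI1.
have -> : gstep J1 x' = rcons J1 x' by rewrite /gstep (negbTE hx').
have [J3 -> _] := gfold_ext [seq tperm x x' i | i <- L2] (rcons J1 x').
rewrite -cats1 -catA /= mem_cat inE eqxx orbT good_cat //; split => //.
by apply/allP => y /ntx.
Qed.

End Good.


Section Prob.
Variables (T : finType) (e : rel T) (K : nat).
Local Notation V := ({x : T * T * 'I_K.+2 | hvalid e x}).
Local Notation adj := (@hadj T e K).

Definition Lseq (s : {perm V}) := [seq s y | y <- enum [set: V]].
Definition Is (s : {perm V}) := greedy_mis adj (Lseq s).
Definition Gd s y := (y \in Is s) && good (Is s) y.
Definition Ncnt y := #|[set s | Gd s y]|.

Lemma Lseq_uniq s : uniq (Lseq s).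
Proof. rewrite map_inj_uniq ?enum_uniq //; exact: perm_inj. Qed.

Lemma Lseq_all s y : y \in Lseq s.
Proof.
apply/mapP; exists ((s^-1)%g y); first by rewrite mem_enum inE.
by rewrite permKV.
Qed.

Lemma Is_uniq s : uniq (Is s).
Proof. exact: (subseq_uniq (greedy_sub _) (Lseq_uniq s)). Qed.

Lemma LseqM s t : Lseq (s * t)%g = map t (Lseq s).
Proof. rewrite /Lseq -map_comp; apply: eq_map => y; by rewrite /= permM. Qed.

Lemma N_le (y y' : V) : hedge y' = hedge y -> Ncnt y <= Ncnt y'.
Proof.
move=> hh; rewrite /Ncnt -(card_imset _ (mulIg (tperm y y'))).
apply: subset_leq_card; apply/subsetP => z /imsetP[s]; rewrite inE => /andP[H1 H2] ->.
rewrite inE /Gd /Is LseqM.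
have := swap_good (Lseq_uniq s) (Lseq_all s y') hh H1 H2.
by case=> -> ->.
Qed.

Lemma N_eq (y y' : V) : hedge y' = hedge y -> Ncnt y = Ncnt y'.
Proof. by move=> hh; apply/eqP; rewrite eqn_leq !N_le. Qed.

Lemma count_uniq_sum (q : pred V) (I : seq V) : uniq I ->
  count q I = \sum_(y : V) ((y \in I) && q y : nat).
Proof.
move=> uI; rewrite -sum1_count big_mkcond /= big_uniq //= big_mkcond /=.
by apply: eq_bigr => y _; case: (y \in I); case: (q y).
Qed.

Lemma sum_bool_card (c : pred {perm V}) : \sum_s (c s : nat) = #|[set s | c s]|.
Proof.
rewrite -sum1_card [RHS]big_mkcond /=; apply: eq_bigr => s _; by rewrite inE; case: (c s).
Qed.

Lemma sum_count (P : pred V) :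
  \sum_s count (fun y => P y && good (Is s) y) (Is s) = \sum_(y : V) P y * Ncnt y.
Proof.
rewrite (eq_bigr (fun s => \sum_(y : V) ((y \in Is s) && (P y && good (Is s) y) : nat))); last first.
  by move=> s _; rewrite count_uniq_sum ?Is_uniq.
rewrite exchange_big /=; apply: eq_bigr => y _.
rewrite /Ncnt -sum_bool_card big_distrr /=; apply: eq_bigr => s _.
by rewrite /Gd; case: (y \in Is s); case: (P y); case: (good _ _).
Qed.

Definition sibl (y : V) (c : 'I_K.+2) : V := exist (@hvalid T e K) ((val y).1, c) (valP y).

Lemma sibl_inj (y : V) : injective (sibl y).
Proof. by move=> c1 c2 /(congr1 (fun z => (val z).2)). Qed.

Lemma sum_sibl (y : V) (F : 'I_K.+2 -> nat) :
  \sum_(y' : V | hedge y' == hedge y) F (val y').2 = \sum_(c : 'I_K.+2) F c.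
Proof.
have -> : \sum_(y' : V | hedge y' == hedge y) F (val y').2 =
          \sum_(y' in [set sibl y c | c in [set: 'I_K.+2]]) F (val y').2.
  apply: eq_bigl => y'; apply/idP/idP.
    move=> /eqP hh; apply/imsetP; exists (val y').2; first by rewrite inE.
    apply: val_inj; move: hh; rewrite /= /hedge => <-; by rewrite -surjective_pairing.
  by case/imsetP => c _ ->.
rewrite big_imset /=; first by apply: eq_bigl => c; rewrite inE.
by move=> c1 c2 _ _; apply: sibl_inj.
Qed.

Lemma sum_dir2 : \sum_(c : 'I_K.+2) ((nat_of_ord c < 2)%N : nat) = 2.
Proof.
by rewrite !big_ord_recl /= big1.
Qed.

Lemma sum_undirK : \sum_(c : 'I_K.+2) (~~ (nat_of_ord c < 2)%N : nat) = K.
Proof.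
rewrite !big_ord_recl /= (eq_bigr (fun _ => 1)); first by rewrite sum1_card card_ord.
by move=> i _; rewrite /bump /=.
Qed.

Lemma sibling_count :
  K * \sum_(y : V) hdir y * Ncnt y = 2 * \sum_(y : V) (~~ hdir y) * Ncnt y.
Proof.
rewrite big_distrr [RHS]big_distrr /=.
transitivity (\sum_(y : V) \sum_(y' : V | hedge y' == hedge y) hdir y * (~~ hdir y') * Ncnt y').
  apply: eq_bigr => y _.
  rewrite (eq_bigr (fun y' => hdir y * Ncnt y * (~~ hdir y'))); last first.
    by move=> y' /eqP hh; rewrite (N_eq hh) mulnAC.
  rewrite -big_distrr (sum_sibl y (fun c => ~~ (nat_of_ord c < 2)%N)).
  by rewrite mulnC; congr (_ * _); symmetry; exact: sum_undirK.
rewrite (exchange_big_dep (fun _ => true)) //=.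
apply: eq_bigr => y' _.
rewrite (eq_bigl (fun y => hedge y == hedge y')); last by move=> y; rewrite eq_sym.
rewrite (eq_bigr (fun y => (~~ hdir y') * Ncnt y' * hdir y)); last first.
  by move=> y _; rewrite -mulnA mulnC.
rewrite -big_distrr (sum_sibl y' (fun c => (nat_of_ord c < 2)%N)).
by rewrite [RHS]mulnC; congr (_ * _); exact: sum_dir2.
Qed.

End Prob.


Section Matching.
Variables (T : finType) (e : rel T) (K : nat).
Local Notation V := ({x : T * T * 'I_K.+2 | hvalid e x}).
Local Notation adj := (@hadj T e K).

Definition epair (y : V) : seq T := [:: (val y).1.1; (val y).1.2].

Lemma pairwise_good (I : seq V) : uniq I ->
  pairwise (fun a b => ~~ touch a b) [seq y <- I | good I y].
Proof.
elim/last_ind: I => [//|I x IH]; rewrite rcons_uniq => /andP[xI uI].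
rewrite filter_rcons (eq_in_filter (a2 := good I)); last first.
  by move=> y yI; rewrite good_rcons.
case: ifP => [gx|_]; last exact: IH.
rewrite pairwise_rcons IH // andbT; move: gx; rewrite good_last // => /allP gx.
by apply/allP => y; rewrite mem_filter => /andP[_ /gx].
Qed.

Lemma flatten_epair_uniq (J : seq V) :
  pairwise (fun a b => ~~ touch a b) J -> uniq (flatten (map epair J)).
Proof.
elim: J => [//|y J IH] /andP[ny pJ].
have -> : flatten (map epair (y :: J)) = epair y ++ flatten (map epair J) by [].
rewrite cat_uniq IH // andbT /epair /= inE hv_neq andbT.
apply/hasP => [[w wJ wy]].
move/flatten_mapP: wJ => [y' y'J wy'].
have : touch y y'.
  apply/existsP; exists w; apply/andP; split.
    by move: wy; rewrite /hends !inE.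
  by move: wy'; rewrite /hends /epair !inE.
by move/allP: ny => /(_ y' y'J) /negbTE ->.
Qed.

Lemma cover_epair (J : seq V) : cover_edges (map epair J) = size J.
Proof. by rewrite /cover_edges big_map /= sum1_size. Qed.

Lemma gpath_epair (y : V) : is_gpath e (epair y).
Proof. by rewrite /= andbT; case: y => [[[u v] c] /= /andP[]]. Qed.

Lemma good_le_rho (I : seq V) r : uniq I -> is_rho e r -> count (good I) I <= r.
Proof.
move=> uI [_ Hr]; rewrite -size_filter -cover_epair; apply: Hr.
rewrite /path_cover flatten_epair_uniq ?pairwise_good // andbT.
by apply/allP => p /mapP[y _ ->]; apply: gpath_epair.
Qed.

End Matching.


Section Lower.
Variables (T : finType) (e : rel T) (K : nat).
Hypotheses (esym : symmetric e) (eirr : irreflexive e).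
Local Notation V := ({x : T * T * 'I_K.+2 | hvalid e x}).
Local Notation adj := (@hadj T e K).

Definition deg (I : seq V) (w : T) := count (fun y => w \in hends y) I.

Lemma count2 (A : eqType) (p : pred A) s x y : x != y -> x \in s -> y \in s -> p x -> p y ->
  1 < count p s.
Proof.
move=> xy xs ys px py.
have H1 : 0 < count (pred1 x) s by rewrite -has_count; apply/hasP; exists x => //=.
have H2 : 0 < count (pred1 y) s by rewrite -has_count; apply/hasP; exists y => //=.
have E := count_predUI (pred1 x) (pred1 y) s.
have E0 : count (predI (pred1 x) (pred1 y)) s = 0.
  apply/eqP; rewrite -leqn0 leqNgt -has_count; apply/hasP => [[z _ /= /andP[/eqP -> /eqP]]].
  by move/eqP: xy.
have : count (predU (pred1 x) (pred1 y)) s <= count p s.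
  by apply: sub_count => z /= /orP[]/eqP->.
rewrite E0 addn0 in E; rewrite E => H; apply: leq_trans H.
by rewrite -(addn1 1) leq_add.
Qed.

Variable (I : seq V).
Hypothesis (indI : indep I).
Hypothesis (maxI : forall y : V, y \notin I -> has (adj y) I).

Lemma two_touch a b z1 z2 w1 w2 : a != b -> z1 \in I -> z2 \in I ->
  w1 \in [set a; b] -> w2 \in [set a; b] -> w1 \in hends z1 -> w2 \in hends z2 ->
  (z1 != z2) || (w1 != w2) -> 2 <= deg I a + deg I b.
Proof.
move=> ab z1I z2I Hw1 Hw2 h1 h2.
have D1 : 0 < deg I w1 by rewrite /deg -has_count; apply/hasP; exists z1.
have D2 : 0 < deg I w2 by rewrite /deg -has_count; apply/hasP; exists z2.
case: (eqVneq w1 w2) => [E|nw]; rewrite ?orbF ?orbT => nz.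
  subst w2; have C : 1 < deg I w1 by apply: (count2 nz).
  by move: Hw1 C; rewrite !inE => /orP[]/eqP -> C; [apply: leq_trans C (leq_addr _ _)|
    apply: leq_trans C (leq_addl _ _)].
move: Hw1 Hw2 nw D1 D2; rewrite !inE => /orP[]/eqP -> /orP[]/eqP ->; rewrite ?eqxx //.
  by move=> _ D1 D2; rewrite -(addn1 1) leq_add.
by move=> _ D1 D2; rewrite addnC -(addn1 1) leq_add.
Qed.

Lemma edge_deg a b : e a b -> 2 <= deg I a + deg I b.
Proof.
wlog lab : a b / enum_rank a < enum_rank b.
  move=> W eab; have ab : a != b by apply: contraTneq eab => ->; rewrite eirr.
  case: (ltngtP (enum_rank a) (enum_rank b)) => [H|H|H].
  - exact: W.
  - by rewrite addnC; apply: W => //; rewrite esym.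
  - by move/val_inj/enum_rank_inj: H => E; rewrite E eqxx in ab.
move=> eab; have ab : a != b by apply: contraTneq eab => ->; rewrite eirr.
have hv : hvalid e ((a, b), (ord0 : 'I_K.+2)) by rewrite /hvalid /= eab lab.
pose xc (c : 'I_K.+2) : V := exist _ ((a, b), c) hv.
have hxc c : hends (xc c) = [set a; b] by [].
rewrite leqNgt; apply/negP => Hlt.
have noI : forall y, y \in I -> hedge y != (a, b).
  move=> y yI; apply/negP => /eqP hy.
  move: Hlt; rewrite ltnNge (@two_touch a b y y a b) //; first by rewrite !inE eqxx.
    by rewrite !inE eqxx orbT.
    by rewrite (@hends_eq _ _ _ y (xc ord0) hy) hxc !inE eqxx.
    by rewrite (@hends_eq _ _ _ y (xc ord0) hy) hxc !inE eqxx orbT.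
  by rewrite ab orbT.
have nbr c : exists z, exists w, [/\ z \in I, w \in [set a; b], w \in hends z &
                                 hport (xc c) w = hport z w].
  have xI : xc c \notin I by apply/negP => /noI; rewrite eqxx.
  case/hasP: (maxI xI) => z zI /andP[_ /orP[/eqP hz|/andP[_ /existsP[w]]]].
    by move: (noI z zI); rewrite -hz eqxx.
  rewrite inE => /andP[/andP[w1 w2] /eqP hp].
  by exists z, w; split.
have [z [w [zI wab wz hp]]] := nbr ord0.
have [c hc] : exists c, hport (xc c) w = ~~ hport z w.
  have c1lt : 1 < K.+2 by [].
  move: wab; rewrite !inE => /orP[]/eqP ->.
    case: (hport z a).
      by exists ord0; rewrite /hport /= eqxx.
    by exists (Ordinal c1lt); rewrite /hport /= eqxx.
  case: (hport z b).
    by exists (Ordinal c1lt); rewrite /hport /= eq_sym (negbTE ab).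
  by exists ord0; rewrite /hport /= eq_sym (negbTE ab).
have [z' [w' [z'I w'ab w'z hp']]] := nbr c.
case: (boolP ((z != z') || (w != w'))) => [nn|].
  by move: Hlt; rewrite ltnNge (two_touch ab zI z'I wab w'ab wz w'z nn).
rewrite negb_or !negbK => /andP[/eqP Ez /eqP Ew]; subst z' w'.
by move: hp'; rewrite hc; case: (hport z w).
Qed.

Lemma path_deg x q : path e x q -> 2 * size q + deg I x <= 2 * \sum_(w <- x :: q) deg I w.
Proof.
elim: q x => [|y q IH] x /=; first by rewrite big_cons big_nil addn0 muln0 add0n leq_pmull.
move=> /andP[exy py]; have := IH y py; have := edge_deg exy.
rewrite !big_cons /= => H1 H2; rewrite mulnDr mulnS.
rewrite (mulnDr 2 (deg I y)) in H2.
lia.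
Qed.

Lemma sum_bool_cardT (A : {set T}) : \sum_(w : T) (w \in A : nat) = #|A|.
Proof.
rewrite -sum1_card [RHS]big_mkcond /=; apply: eq_bigr => w _; by case: (w \in A).
Qed.

Lemma count_sum (p : pred V) s : count p s = \sum_(y <- s) (p y : nat).
Proof. by elim: s => [|y s IH]; rewrite ?big_nil ?big_cons //= IH. Qed.

Lemma sum_deg : \sum_(w : T) deg I w <= 2 * size I.
Proof.
rewrite /deg (eq_bigr (fun w => \sum_(y <- I) (w \in hends y : nat))); last first.
  by move=> w _; rewrite count_sum.
rewrite exchange_big /= -sum1_size big_distrr /=; apply: leq_sum => y _.
by rewrite sum_bool_cardT /hends cards2 muln1; case: (_ != _).
Qed.

Lemma lower_bound r : is_rho e r -> r <= 2 * size I.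
Proof.
case=> [[C /andP[aC uC] <-] _]; apply: leq_trans (sum_deg).
apply: (@leq_trans (\sum_(p <- C) \sum_(w <- p) deg I w)).
  rewrite /cover_edges big_seq [X in _ <= X]big_seq; apply: leq_sum => p pC.
  move/allP: aC => /(_ p pC); case: p pC => [//|x q] _ /= px.
  have := path_deg px; rewrite big_cons; lia.
rewrite -big_flatten /= big_uniq //= [X in _ <= X]big_mkcond /= big_mkcond /=.
by apply: leq_sum => w _; case: (w \in _).
Qed.

End Lower.


Section Seqs.
Variables (T : finType) (R : rel T).
Hypothesis sR : symmetric R.

Lemma last_rev (w : T) p : last w (rev p) = head w p.
Proof. by case: p => [//|x q]; rewrite rev_cons last_rcons. Qed.

Lemma head_rev (w : T) p : head w (rev p) = last w p.
Proof. by rewrite -{2}(revK p) last_rev. Qed.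

Lemma gpath_rev p : is_gpath R (rev p) = is_gpath R p.
Proof.
case: p => [//|x q]; rewrite {1}lastI rev_rcons /= rev_path.
have E : (fun z => R^~ z) =2 R by move=> a b; rewrite /= sR.
exact: (eq_path E).
Qed.

Lemma orient_last p w : is_gpath R p -> (w == head w p) || (w == last w p) ->
  exists p', [/\ is_gpath R p', perm_eq p p' & last w p' = w].
Proof.
move=> gp /orP[/eqP E|/eqP E].
  exists (rev p); split; rewrite ?gpath_rev ?last_rev //.
  by rewrite perm_sym perm_rev.
by exists p; split.
Qed.

Lemma orient_head p w : is_gpath R p -> (w == head w p) || (w == last w p) ->
  exists p', [/\ is_gpath R p', perm_eq p p' & head w p' = w].
Proof.
move=> gp H; have [p' [g1 pp E]] := orient_last gp H.
exists (rev p'); split; rewrite ?gpath_rev ?head_rev //.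
by rewrite perm_sym perm_rev perm_sym.
Qed.

Lemma cover_cons (p : seq T) C : cover_edges (p :: C) = (size p).-1 + cover_edges C.
Proof. by rewrite /cover_edges big_cons. Qed.

Lemma perm_inv (C C' : seq (seq T)) : perm_eq C C' ->
  [/\ all (is_gpath R) C = all (is_gpath R) C',
      uniq (flatten C) = uniq (flatten C') & cover_edges C = cover_edges C'].
Proof.
move=> pC; split; first exact: perm_all.
  by apply: perm_uniq; apply: perm_flatten.
exact: perm_big.
Qed.

Lemma extract (C : seq (seq T)) w : w \in flatten C -> exists p C0, [/\ perm_eq C (p :: C0), p \in C & w \in p].
Proof.
case/flattenP => p pC wp; exists p, (rem p C); split => //; exact: perm_to_rem.
Qed.

Lemma gpath_nil p : is_gpath R p -> 0 < size p.
Proof. by case: p. Qed.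

Lemma add_edge1 C u v : all (is_gpath R) C -> uniq (flatten C) -> R u v ->
  u \notin flatten C -> v \in flatten C ->
  (forall p, p \in C -> v \in p -> (v == head v p) || (v == last v p)) ->
  exists C', [/\ all (is_gpath R) C', uniq (flatten C') & cover_edges C' = (cover_edges C).+1].
Proof.
move=> aC uC ruv uF vF Hv.
have [p [C0 [pC pin vp]]] := extract vF.
have [aC' uC' cC'] := perm_inv pC.
have uC0 := uC.
rewrite aC' /= in aC; case/andP: aC => gp aC0.
rewrite uC' /= in uC.
have [p' [gp' pp' lp']] := orient_last gp (Hv p pin vp).
exists (rcons p' u :: C0); split.
- rewrite /= aC0 andbT; case: p' gp' pp' lp' => [//|x q] /= gq _ lq.
  by rewrite rcons_path gq /= lq sR.
- rewrite /= cat_rcons -cat1s uniq_catCA /=.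
  have P1 : perm_eq (p' ++ flatten C0) (flatten C).
    have pp2 : perm_eq p' p by rewrite perm_sym.
    apply: (perm_trans (perm_cat pp2 (perm_refl _))).
    by have := perm_flatten pC; rewrite perm_sym.
  by rewrite (perm_uniq P1) (perm_mem P1) uF uC0.
- rewrite cover_cons cC' cover_cons size_rcons (perm_size pp').
  by have := gpath_nil gp'; case: (size p') => // n _; rewrite /= addSn.
Qed.

Lemma add_edge C u v : all (is_gpath R) C -> uniq (flatten C) -> R u v -> u != v ->
  (forall p, p \in C -> u \in p -> (u == head u p) || (u == last u p)) ->
  (forall p, p \in C -> v \in p -> (v == head v p) || (v == last v p)) ->
  (forall p, p \in C -> u \in p -> v \notin p) ->
  exists C', [/\ all (is_gpath R) C', uniq (flatten C') & cover_edges C' = (cover_edges C).+1].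
Proof.
move=> aC uC ruv uv Hu Hv Huv.
case: (boolP (u \in flatten C)) => uF; case: (boolP (v \in flatten C)) => vF.
- have [p [C0 [pC pin up]]] := extract uF.
  have [aC' uC' cC'] := perm_inv pC.
  have vp : v \notin p by apply: Huv.
  have vF0 : v \in flatten C0.
    by move: vF; rewrite (perm_mem (perm_flatten pC)) /= mem_cat (negbTE vp).
  have [q [C1 [qC qin vq]]] := extract vF0.
  have qinC : q \in C.
    by rewrite (perm_mem pC) inE (perm_mem qC) inE eqxx orbT.
  have pC2 : perm_eq C (p :: q :: C1) by rewrite (perm_trans pC) // perm_cons.
  have [aC2 uC2 cC2] := perm_inv pC2.
  rewrite aC2 /= in aC; case/and3P: aC => gp gq aC1.
  rewrite uC2 /= in uC.
  have [p' [gp' pp' lp']] := orient_last gp (Hu p pin up).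
  have [q' [gq' qq' hq']] := orient_head gq (Hv q qinC vq).
  exists ((p' ++ q') :: C1); split.
  + rewrite /= aC1 andbT; case: p' gp' pp' lp' => [//|x r] /= gr _ lr.
    case: q' gq' qq' hq' => [//|y s] /= gs _ hs; subst y.
    by rewrite cat_path gr /= lr ruv gs.
  + rewrite /= -catA -(perm_uniq (perm_cat pp' (perm_cat qq' (perm_refl _)))).
    exact: uC.
  + rewrite cover_cons cC2 !cover_cons size_cat (perm_size pp') (perm_size qq').
    have := gpath_nil gp'; have := gpath_nil gq'.
    case: (size p') => // n1; case: (size q') => // n2 _ _.
    by rewrite addSn addnS /= addnA addSn.
- have rvu : R v u by rewrite sR.
  exact: (add_edge1 aC uC rvu vF uF Hu).
- exact: (add_edge1 aC uC ruv uF vF Hv).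
- exists ([:: u; v] :: C); split.
  + by rewrite /= aC andbT ruv.
  + by rewrite /= inE negb_or uv uF vF uC.
  + by rewrite cover_cons.
Qed.

End Seqs.


Lemma ordS_val n (i : 'I_n) : nat_of_ord (ordS i) = if i.+1 == n then 0 else i.+1.
Proof.
rewrite /ordS /=; case: eqP => [->|ne]; first by rewrite modnn.
by rewrite modn_small //; have := ltn_ord i; lia.
Qed.

Lemma ordS_neq n (i : 'I_n) : 1 < n -> i != ordS i.
Proof.
move=> n1; apply/negP => /eqP/(congr1 (@nat_of_ord n)); rewrite ordS_val.
have := ltn_ord i; case: eqP => /= E; lia.
Qed.

Lemma ordSS_neq n (i : 'I_n) : 2 < n -> i != ordS (ordS i).
Proof.
move=> n1; apply/negP => /eqP/(congr1 (@nat_of_ord n)).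
have h1 := ordS_val i; have h2 := ordS_val (ordS i); have := ltn_ord i; move: h1 h2.
case: (@eqP _ i.+1 n) => e1 h1; case: (@eqP _ (ordS i).+1 n) => e2 h2; lia.
Qed.

Lemma cyc_all n (a b : 'I_n -> bool) : (forall i, b i != a (ordS i)) ->
  (forall i, ~~ (a i && b i)) -> forall i, a i || b i.
Proof.
move=> Hab Hx j; apply/negP => /negP Hj.
have S1 : \sum_(i < n) (a i + b i) = n.
  rewrite big_split /= (reindex_inj (can_inj (@ordSK n))) /= -big_split /=.
  rewrite -[n in RHS]card_ord -sum1_card; apply: eq_bigr => i _.
  by move: (Hab i); case: (a (ordS i)); case: (b i).
have S2 : \sum_(i < n) (a i + b i) <= n.-1.
  rewrite (bigD1 j) //=; have -> : a j + b j = 0 by move: Hj; case: (a j); case: (b j).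
  rewrite add0n; apply: (@leq_trans (\sum_(i < n | i != j) 1)).
    apply: leq_sum => i _; by move: (Hx i); case: (a i); case: (b i).
  by rewrite sum1_card cardC1 card_ord.
have : 0 < n by have := ltn_ord j; lia.
rewrite S1 in S2; lia.
Qed.

Section Cycle.
Variables (T : finType) (e : rel T) (K : nat).
Local Notation V := ({x : T * T * 'I_K.+2 | hvalid e x}).
Local Notation adj := (@hadj T e K).

Lemma port_ne (I : seq V) (indI : indep I) a b w : a \in I -> b \in I -> a != b ->
  w \in hends a -> w \in hends b -> hport a w != hport b w.
Proof.
move=> aI bI ab wa wb; apply/negP => /eqP E.
by move: (indI a b aI bI); rewrite (adj_port ab wa wb E).
Qed.

Lemma three (I : seq V) (indI : indep I) y1 y2 y3 w :
  y1 \in I -> y2 \in I -> y3 \in I -> y1 != y2 -> y1 != y3 -> y2 != y3 ->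
  w \in hends y1 -> w \in hends y2 -> w \in hends y3 -> False.
Proof.
move=> i1 i2 i3 d12 d13 d23 w1 w2 w3.
move: (port_ne indI i1 i2 d12 w1 w2) (port_ne indI i1 i3 d13 w1 w3)
      (port_ne indI i2 i3 d23 w2 w3).
by case: (hport y1 w); case: (hport y2 w); case: (hport y3 w).
Qed.

Lemma hport_both2 (y : V) u w : u != w -> hends y = [set u; w] ->
  ~~ (hport y u && hport y w).
Proof.
move=> uw E.
have uy : u \in hends y by rewrite E !inE eqxx.
have wy : w \in hends y by rewrite E !inE eqxx orbT.
have := hport_both y; have := hv_neq y.
move: uy wy uw; rewrite /hends !inE => /orP[]/eqP -> /orP[]/eqP ->; rewrite ?eqxx //.
by move=> _ _; rewrite andbC.
Qed.

Lemma cycle_false (I : seq V) n (v : 'I_n -> T) (z : 'I_n -> V) :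
  indep I -> 2 < n -> injective v -> (forall i, z i \in I) ->
  (forall i, ~~ (hdir (z i) && good I (z i))) ->
  (forall i, hends (z i) = [set v i; v (ordS i)]) -> False.
Proof.
move=> indI n2 vinj zI zD hz.
have vS i : v i != v (ordS i).
  by apply/negP => /eqP/vinj/eqP; apply/negP; apply: ordS_neq; lia.
have zS i : z i != z (ordS i).
  apply/eqP => E.
  have : v i \in hends (z (ordS i)) by rewrite -E hz !inE eqxx.
  rewrite hz !inE => /orP[/eqP E1|/eqP /vinj E2].
    by move: (vS i); rewrite E1 eqxx.
  by move: (ordSS_neq i n2); rewrite -E2 eqxx.
have mem1 i : v i \in hends (z i) by rewrite hz !inE eqxx.
have mem2 i : v (ordS i) \in hends (z i) by rewrite hz !inE eqxx orbT.
have dirs i : hdir (z i).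
  have := @cyc_all n (fun i => hport (z i) (v i)) (fun i => hport (z i) (v (ordS i))).
  case/(_ _ _ i)/orP.
  - by move=> k; apply: (port_ne indI (zI k) (zI (ordS k)) (zS k) (mem2 k) (mem1 (ordS k))).
  - by move=> k; apply: hport_both2 => //; exact: hz.
  - exact: hport_dir (mem1 i).
  - exact: hport_dir (mem2 i).
have i0 : 'I_n by exists 0; lia.
case: (@arg_minnP _ i0 xpredT (fun k => index (z k) I) isT) => j _ jmin.
move: (zD j); rewrite dirs /=; apply/negP/negPn.
apply/allP => y yT; apply/negP => /existsP [w /andP[wy wzj]].
have yI : y \in I := mem_take yT.
have iy : index y I < index (z j) I := index_ltn yT.
have nz k : y != z k.
  apply/negP => /eqP E; move: iy; rewrite E ltnNge.
  by move: (jmin k isT) => ->.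
move: wzj; rewrite hz !inE => /orP[/eqP Ew|/eqP Ew]; subst w.
- have Ek : ordS (ord_pred j) = j := ord_predK j.
  apply: (three indI yI (zI (ord_pred j)) (zI j) (nz _) (nz _) _ wy _ (mem1 j)).
    by move: (zS (ord_pred j)); rewrite Ek.
  by move: (mem2 (ord_pred j)); rewrite Ek.
- exact: (three indI yI (zI j) (zI (ordS j)) (nz _) (nz _) (zS j) wy (mem2 j) (mem1 _)).
Qed.

End Cycle.


Section Upper.
Variables (T : finType) (e : rel T) (K : nat).
Hypotheses (esym : symmetric e) (eirr : irreflexive e).
Local Notation V := ({x : T * T * 'I_K.+2 | hvalid e x}).
Local Notation adj := (@hadj T e K).

Definition Dp (I : seq V) (y : V) := hdir y && good I y.
Definition Rr (I : seq V) : rel T := fun a b =>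
  [exists z, [&& z \in I, ~~ Dp I z & hends z == [set a; b]]].

Lemma Rr_sym I : symmetric (Rr I).
Proof. by move=> a b; apply: eq_existsb => z; rewrite setUC. Qed.

Lemma hends_two (y : V) a b : hends y = [set a; b] ->
  ((val y).1.1 == a) && ((val y).1.2 == b) || ((val y).1.1 == b) && ((val y).1.2 == a).
Proof.
move=> E.
have h1 : (val y).1.1 \in [set a; b] by rewrite -E mem_hends1.
have h2 : (val y).1.2 \in [set a; b] by rewrite -E mem_hends2.
move: (hv_neq y) h1 h2; rewrite !inE => ne /orP[]/eqP E1 /orP[]/eqP E2;
  rewrite E1 E2 ?eqxx ?orbT // in ne *.
Qed.

Lemma Rr_neq I a b : Rr I a b -> a != b.
Proof.
case/existsP => z /and3P[_ _ /eqP E]; have := hv_neq z.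
by case/orP: (hends_two E) => /andP[/eqP-> /eqP->] //; rewrite eq_sym.
Qed.

Lemma Rr_e I a b : Rr I a b -> e a b.
Proof.
case/existsP => z /and3P[_ _ /eqP E].
have hv : e (val z).1.1 (val z).1.2 by have /andP[] := valP z.
by case/orP: (hends_two E) => /andP[/eqP<- /eqP<-] //; rewrite esym.
Qed.

Lemma Dp_rcons I x y : y \in I -> Dp (rcons I x) y = Dp I y.
Proof. by move=> yI; rewrite /Dp good_rcons. Qed.

Lemma Rr_mono I x a b : Rr I a b -> Rr (rcons I x) a b.
Proof.
case/existsP => z /and3P[zI zD zE]; apply/existsP; exists z.
by rewrite mem_rcons inE zI orbT Dp_rcons // zD.
Qed.

Lemma hends_hedge (y1 y2 : V) : hends y1 = hends y2 -> hedge y1 = hedge y2.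
Proof.
move=> E; apply: (@ends2 _ _ _ _ _ (val y1).1.1 (val y1).1.2 (hv_neq y1));
  rewrite ?mem_hends1 ?mem_hends2 // -E ?mem_hends1 ?mem_hends2 //.
Qed.

Lemma uniq_in_flatten (C : seq (seq T)) p : uniq (flatten C) -> p \in C -> uniq p.
Proof.
elim: C => [//|q C IH] /=; rewrite cat_uniq inE => /and3P[uq _ uC] /orP[/eqP->//|].
exact: IH.
Qed.

Lemma hends_set_neq (y : V) a b : hends y = [set a; b] -> a != b.
Proof.
move=> E; have := hv_neq y.
by case/orP: (hends_two E) => /andP[/eqP-> /eqP->] //; rewrite eq_sym.
Qed.

Lemma endpoint (I : seq V) x C p w :
  x \notin I -> indep (rcons I x) -> all (is_gpath (Rr I)) C -> uniq (flatten C) ->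
  p \in C -> w \in p -> w \in hends x -> (w == head w p) || (w == last w p).
Proof.
move=> xI ind aC uC pC wp wx.
have gp : is_gpath (Rr I) p by move/allP: aC; apply.
have up := uniq_in_flatten uC pC.
case: p gp up wp {pC} => [//|x0 q] gq uq wp.
case: (eqVneq w x0) => [->|wx0] //.
rewrite /=; apply/negPn/negP => nl.
have wq : w \in q by move: wp; rewrite inE (negbTE wx0).
rewrite /= in gq.
case/splitPr: wq gq uq nl => q1 q2.
case: q2 => [|b q3] gq uq nl.
  by move: nl; rewrite last_cat /= eqxx.
rewrite cat_path /= in gq; case/and4P: gq => _ raw rwb _.
set a := last x0 q1 in raw.
have ab : a != b.
  apply/eqP => Eab; move: uq; rewrite -cat_cons cat_uniq => /and3P[_ /hasP H _].
  by apply: H; exists b; [rewrite !inE eqxx orbT | rewrite -Eab /a mem_last].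
case/existsP: raw => z1 /and3P[z1I _ /eqP E1].
case/existsP: rwb => z2 /and3P[z2I _ /eqP E2].
have I' y : y \in I -> y \in rcons I x by move=> yI; rewrite mem_rcons inE yI orbT.
have xI' : x \in rcons I x by rewrite mem_rcons inE eqxx.
have nx y : y \in I -> x != y by move=> yI; apply: contraNneq xI => ->.
have z12 : z1 != z2.
  apply/eqP => E; have : a \in hends z2 by rewrite -E E1 !inE eqxx.
  rewrite E2 !inE => /orP[/eqP Eaw|/eqP Eab]; last by rewrite Eab eqxx in ab.
  by have := hends_set_neq E1; rewrite Eaw eqxx.
apply: (three ind xI' (I' _ z1I) (I' _ z2I) (nx _ z1I) (nx _ z2I) z12 wx).
  by rewrite E1 !inE eqxx orbT.
by rewrite E2 !inE eqxx.
Qed.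

Lemma cyc_contra (I : seq V) x a0 q :
  x \notin I -> indep (rcons I x) -> ~~ Dp (rcons I x) x ->
  path (Rr I) a0 q -> uniq (a0 :: q) -> hends x = [set a0; last a0 q] -> False.
Proof.
move=> xI ind xD gq uq hx.
have xI' : x \in rcons I x by rewrite mem_rcons inE eqxx.
have I' y : y \in I -> y \in rcons I x by move=> yI; rewrite mem_rcons inE yI orbT.
have Rlift a b : Rr I a b -> exists y, [&& y \in rcons I x, ~~ Dp (rcons I x) y & hends y == [set a; b]].
  case/existsP => y /and3P[yI yD yE]; exists y; by rewrite I' // Dp_rcons // yD.
have ne := hends_set_neq hx.
case: q gq uq hx ne => [|b1 q']; first by rewrite eqxx.
case: q' => [|b2 q''] gq uq hx ne.
  move: gq => /= /andP[/existsP [z /and3P[zI zD /eqP zE]] _].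
  have hh : hedge z = hedge x by apply: hends_hedge; rewrite zE hx.
  have zx : z != x by apply: contraNneq xI => <-.
  by move: (ind z x (I' _ zI) xI'); rewrite /hadj zx hh eqxx.
set p := [:: a0, b1, b2 & q''].
set n := size p.
have n2 : 2 < n by rewrite /n /p /=.
pose v (i : 'I_n) := nth a0 p i.
have vinj : injective v.
  move=> i j /eqP; rewrite /v nth_uniq ?ltn_ord // => /eqP; exact: val_inj.
have wit i : exists y, [&& y \in rcons I x, ~~ Dp (rcons I x) y & hends y == [set v i; v (ordS i)]].
  have := ordS_val i; case: eqP => [Ei|Ni] Es.
    exists x; rewrite xI' xD /= hx /v Es setUC.
    have -> : nat_of_ord i = size [:: b1, b2 & q''] by move: Ei; rewrite /n /p /= => -[].
    by rewrite -last_nth.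
  apply: Rlift; rewrite /v Es.
  have il : i < size [:: b1, b2 & q''] by have := ltn_ord i; move: Ni; rewrite /n /p /=; lia.
  by move/pathP: gq => /(_ a0 i il).
pose z i := odflt x [pick y | [&& y \in rcons I x, ~~ Dp (rcons I x) y & hends y == [set v i; v (ordS i)]]].
have zP i : [&& z i \in rcons I x, ~~ Dp (rcons I x) (z i) & hends (z i) == [set v i; v (ordS i)]].
  rewrite /z; case: pickP => [y //|H]; have [y Hy] := wit i; by move: (H y); rewrite Hy.
apply: (@cycle_false _ _ _ (rcons I x) n v z ind n2 vinj).
- by move=> i; case/and3P: (zP i).
- by move=> i; case/and3P: (zP i).
- by move=> i; case/and3P: (zP i) => _ _ /eqP.
Qed.

Lemma upper_inv (I : seq V) : uniq I -> indep I -> exists C,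
  [/\ all (is_gpath (Rr I)) C, uniq (flatten C) & cover_edges C + count (Dp I) I = size I].
Proof.
elim/last_ind: I => [|I x IH]; first by move=> _ _; exists [::]; split; rewrite // /cover_edges big_nil.
rewrite rcons_uniq => /andP[xI uI] ind.
have I' y : y \in I -> y \in rcons I x by move=> yI; rewrite mem_rcons inE yI orbT.
have indI : indep I by move=> a b aI bI; apply: ind; apply: I'.
have [C [aC uC cC]] := IH uI indI.
have cnt : count (Dp (rcons I x)) (rcons I x) = count (Dp I) I + Dp (rcons I x) x.
  rewrite -cats1 count_cat /= addn0; congr (_ + _).
  by apply: eq_in_count => y yI; rewrite cats1 Dp_rcons.
have aC' : all (is_gpath (Rr (rcons I x))) C.
  apply/allP => p pC; move/allP: aC => /(_ p pC); case: p {pC} => //= x0 q.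
  by apply: sub_path => a b; apply: Rr_mono.
case: (boolP (Dp (rcons I x) x)) => xD.
  by exists C; split => //; rewrite size_rcons cnt xD; lia.
set u := (val x).1.1; set v := (val x).1.2.
have ruv : Rr (rcons I x) u v.
  by apply/existsP; exists x; rewrite mem_rcons inE eqxx xD /=; apply/eqP.
have Hu p : p \in C -> u \in p -> (u == head u p) || (u == last u p).
  by move=> pC up; apply: (endpoint xI ind aC uC pC up (mem_hends1 x)).
have Hv p : p \in C -> v \in p -> (v == head v p) || (v == last v p).
  by move=> pC vp; apply: (endpoint xI ind aC uC pC vp (mem_hends2 x)).
have uv : u != v := hv_neq x.
have Huv p : p \in C -> u \in p -> v \notin p.
  move=> pC up; apply/negP => vp.
  have gp : is_gpath (Rr I) p by move/allP: aC; apply.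
  have upq := uniq_in_flatten uC pC.
  move: (Hu p pC up) (Hv p pC vp) gp upq; case: p {pC up vp} => [//|a0 q] /=.
  move=> /orP[]/eqP Eu /orP[]/eqP Ev gp upq.
  - by move: uv; rewrite Eu Ev eqxx.
  - by apply: (cyc_contra xI ind xD gp upq); rewrite /hends -/u -/v Eu Ev.
  - by apply: (cyc_contra xI ind xD gp upq); rewrite /hends -/u -/v Eu Ev setUC.
  - by move: uv; rewrite Eu Ev eqxx.
have [C' [a' u' c']] := add_edge (@Rr_sym (rcons I x)) aC' uC ruv uv Hu Hv Huv.
by exists C'; split => //; rewrite size_rcons cnt (negbTE xD) c'; lia.
Qed.

Lemma upper_bound (I : seq V) r : uniq I -> indep I -> is_rho e r ->
  size I <= r + count (Dp I) I.
Proof.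
move=> uI ind [_ Hr]; have [C [aC uC <-]] := upper_inv uI ind.
rewrite leq_add2r; apply: Hr; rewrite /path_cover uC andbT.
apply/allP => p pC; move/allP: aC => /(_ p pC); case: p {pC} => //= x0 q.
by apply: sub_path => a b; apply: Rr_e.
Qed.

End Upper.

Unset Implicit Arguments.
Import Order.TTheory GRing.Theory Num.Theory.
Local Open Scope ring_scope.

Section Final.
Variables (T : finType) (e : rel T) (K : nat).
Hypotheses (esym : symmetric e) (eirr : irreflexive e).
Local Notation V := ({x : T * T * 'I_K.+2 | hvalid e x}).
Local Notation adj := (@hadj T e K).

Lemma card_out (s : {perm V}) : #|alg2_output s| = size (Is s).
Proof.
rewrite /alg2_output card_in_imset; first by apply/card_uniqP; apply: Is_uniq.
move=> x y xI yI hh; apply/eqP; apply/negPn/negP => nxy.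
by move: (greedy_indep xI yI); rewrite /hadj nxy hh eqxx.
Qed.

Lemma sum_const_perm (n : nat) : (\sum_(s : {perm V}) n = #|{perm V}| * n)%N.
Proof. by rewrite -sum_nat_const; apply: eq_bigl => s; rewrite inE. Qed.

Lemma nat_lower r : is_rho e r ->
  (#|{perm V}| * r <= 2 * \sum_(s : {perm V}) #|alg2_output s|)%N.
Proof.
move=> Hr; rewrite -sum_const_perm big_distrr /=; apply: leq_sum => s _.
rewrite card_out; apply: (lower_bound esym eirr _ Hr).
by move=> y; apply: greedy_max; apply: Lseq_all.
Qed.

Lemma nat_upper r : is_rho e r ->
  (K * \sum_(s : {perm V}) #|alg2_output s| <= K * (#|{perm V}| * r) + 2 * (#|{perm V}| * r))%N.
Proof.
move=> Hr.
have H1 : (\sum_(s : {perm V}) #|alg2_output s| <=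
           #|{perm V}| * r + \sum_(s : {perm V}) count (fun y => hdir y && good (Is s) y) (Is s))%N.
  rewrite -sum_const_perm -big_split /=; apply: leq_sum => s _.
  rewrite card_out; exact: (upper_bound esym (Is_uniq s) (@greedy_indep _ _ _ _) Hr).
have H2 : (K * \sum_(s : {perm V}) count (fun y => hdir y && good (Is s) y) (Is s) <=
           2 * (#|{perm V}| * r))%N.
  rewrite sum_count sibling_count -sum_count leq_mul2l /= -sum_const_perm.
  apply: leq_sum => s _; apply: leq_trans (good_le_rho (Is_uniq s) Hr).
  by apply: sub_count => y /andP[].
have := leq_mul (leqnn K) H1; rewrite mulnDr; lia.
Qed.

End Final.

Theorem lemma4p5 (T : finType) (e : rel T) (K : nat) (r : nat) :
  symmetric e -> irreflexive e -> (0 < K)%N -> is_rho e r ->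
  (1 / 2) * (r%:R : rat) <= alg2_expected e K /\
  alg2_expected e K <= (1 + 2 / K%:R) * (r%:R : rat).
Proof.
move=> esym eirr K0 Hr.
set N := #|{perm HV e K}|.
set S := (\sum_(s : {perm HV e K}) #|alg2_output s|)%N.
have N0 : (0 < N)%N by apply/card_gt0P; exists 1%g.
have N0r : (0 : rat) < N%:R by rewrite ltr0n.
have K0r : (0 : rat) < K%:R by rewrite ltr0n.
rewrite /alg2_expected -/N -/S; split.
  rewrite ler_pdivlMr //.
  have -> : 1 / 2 * r%:R * N%:R = 1 / 2 * (r%:R * N%:R) :> rat by rewrite mulrA.
  have := @nat_lower _ _ K esym eirr _ Hr; rewrite -/N -/S -(ler_nat rat) !natrM.
  rewrite [(N%:R * _)]mulrC.
  set X := ((r%:R * N%:R) : rat); set Y := (S%:R : rat) => H.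
  lra.
rewrite ler_pdivrMr //.
have := @nat_upper _ _ K esym _ Hr; rewrite -/N -/S -(ler_nat rat) !natrD !natrM.
set X := ((N * r)%N%:R : rat); set Y := (S%:R : rat); set k := (K%:R : rat) => H.
have E : (1 + 2 / k) * r%:R * N%:R = (k * X + 2 * X) / k.
  rewrite /X natrM; field; lra.
rewrite E ler_pdivlMr // /X natrM mulrC.
set Z := (N%:R * r%:R : rat) in H *.
nra.
Qed.
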